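(* Let $A$ be an abelian surface over a finite field $\mathbb{F}_q$ of characteristic $p$, with Frobenius characteristic polynomial $\chi_{A,q}(T) = T^4 + a_1 T^3 + a_2 T^2 + a_1 q T + q^2$. Let $\ell \neq p$ be a prime, let $r$ be the order of the Frobenius endomorphism $\varphi$ on $A[\ell]$, and assume $\gcd(\ell, r) = 1$. Then there exist $r$-th roots of unity $\zeta_1,\zeta_2 \in \overline{\mathbb{F}}_\ell$ with $\operatorname{lcm}(\operatorname{ord}(\zeta_1),\operatorname{ord}(\zeta_2)) = r$ if $r$ is odd, and $\operatorname{lcm}(\operatorname{ord}(\zeta_1),\operatorname{ord}(\zeta_2)) \in \{r, r/2\}$ if $r$ is even, such that, with $\eta_j = \zeta_j + \zeta_j^{-1} + 2$ ($j=1,2$), $$a_1^2 \equiv (\sqrt{\eta_1} \pm \sqrt{\eta_2})^2\, q \pmod{\ell} \quad\text{and}\quad (a_2 - 2q)^2 \equiv \eta_1 \eta_2 q^2 \pmod{\ell},$$ where the first congruence means that there exist square roots $u_1, u_2 \in \overline{\mathbb{F}}_\ell$ of $\eta_1, \eta_2$ respectively with $a_1^2 \equiv (u_1 + u_2)^2 q$.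
   Context: The order of $\varphi$ on $A[\ell]$ is defined as follows: via $A[\ell] \cong (\mathbb{Z}/\ell\mathbb{Z})^{4}$, the action of $\varphi$ on $A[\ell]$ is given by a matrix $F_\ell \in \operatorname{GL}_{4}(\mathbb{F}_\ell)$ (the reduction mod $\ell$ of the matrix of Frobenius on the Tate module), and $r$ is the smallest positive integer such that $F_\ell^r = \alpha I$ for some scalar $\alpha \in \mathbb{F}_\ell$, i.e. the order of $F_\ell$ in $\operatorname{PGL}_4(\mathbb{F}_\ell)$. Congruences between integers and elements of $\overline{\mathbb{F}}_\ell$ are understood after reducing the integers modulo $\ell$. *)

(* Defs.v *)
From HB Require Import structures.
From mathcomp Require Import all_boot all_order all_algebra.
Set Implicit Arguments. Unset Strict Implicit. Unset Printing Implicit Defensive.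
Import Order.TTheory GRing.Theory Num.Theory.
Local Open Scope ring_scope.

Definition pgl_order (K : fieldType) (n : nat) (F : 'M[K]_n) (r : nat) : Prop :=
  (0 < r)%N /\ is_scalar_mx (F ^+ r) /\
  (forall k : nat, (0 < k)%N -> (k < r)%N -> ~~ is_scalar_mx (F ^+ k)).

Definition frob_charpoly (K : nzRingType) (a1 a2 : int) (q : nat) : {poly K} :=
  'X^4 + (a1%:~R)%:P * 'X^3 + (a2%:~R)%:P * 'X^2
  + (a1%:~R * q%:R)%:P * 'X + ((q ^ 2)%:R)%:P.

Definition eta_of (K : unitRingType) (z : K) : K := z + z^-1 + 2.

(* Main.v *)
Require Import Defs.
From HB Require Import structures.
From mathcomp Require Import all_boot all_order all_algebra all_field.
From mathcomp Require Import ring.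
Import GRing.Theory.
Local Open Scope ring_scope.

Lemma nth_root_ex (L : closedFieldType) (r : nat) (c : L) : (0 < r)%N ->
  exists b : L, b ^+ r = c.
Proof.
move=> r0; have [x Hx] := @solve_monicpoly L r (fun i => if i == 0%N then c else 0) r0.
exists x; rewrite Hx; case: r r0 {Hx} => // r _.
by rewrite big_ord_recl /= expr0 mulr1 big1 ?addr0 // => i _; rewrite mul0r.
Qed.

Lemma pow_scalar (L : closedFieldType) n (M : 'M[L]_n.+1) (r e : nat) (c d : L) :
  (0 < r)%N -> r%:R != 0 :> L -> c != 0 -> M ^+ r = c%:M ->
  (forall mu, eigenvalue M mu -> mu ^+ e = d) -> M ^+ e = d%:M.
Proof.
move=> r0 rnz cnz HM Heig.
have [b Hb] := @nth_root_ex L r c r0.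
have bnz : b != 0 by apply: contraNneq cnz => b0; rewrite -Hb b0 expr0n gtn_eqF.
pose N := b^-1 *: M.
have HN : horner_mx N ('X^r - 1) = 0.
  rewrite rmorphB /= rmorph1 rmorphXn /= horner_mx_X /N exprZn HM -Hb.
  rewrite -scalemx1 scalerA -exprMn mulVf // expr1n scale1r; exact: subrr.
have sep : separable_poly (mxminpoly N).
  exact: dvdp_separable (mxminpoly_min HN) (separable_Xn_sub_1 rnz).
have [rs Hrs] := closed_field_poly_normal (mxminpoly N).
have lc : lead_coef (mxminpoly N) = 1 by apply/eqP; exact: mxminpoly_monic.
rewrite lc scale1r in Hrs.
have urs : uniq rs by rewrite -separable_prod_XsubC -Hrs.
pose g := 'X^e - (d / b ^+ e)%:P.
have allr : all (root g) rs.
  apply/allP => z zin.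
  have : root (mxminpoly N) z by rewrite Hrs root_prod_XsubC.
  rewrite root_mxminpoly -eigenvalue_root_char => /eigenvalueP [v Hv vnz].
  have : eigenvalue M (b * z).
    apply/eigenvalueP; exists v => //.
    move: Hv; rewrite /N -scalemxAr => /(congr1 (fun A => b *: A)).
    by rewrite scalerA mulfV // scale1r scalerA.
  move/Heig => Hz.
  rewrite /root /g !hornerE -Hz exprMn mulrC mulKf ?expf_neq0 // subrr //.
have ur : uniq_roots rs by rewrite uniq_rootsE.
have [h Hh] := uniq_roots_prod_XsubC allr ur.
have dv : mxminpoly N %| g by rewrite Hrs Hh dvdp_mull.
move/mxminpoly_minP: dv => Hg.
have HNe : N ^+ e = (d / b ^+ e)%:M.
  apply/eqP; rewrite -subr_eq0; apply/eqP; move: Hg.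
  by rewrite /g rmorphB /= rmorphXn /= horner_mx_X horner_mx_C.
have -> : M = b *: N by rewrite /N scalerKV.
rewrite exprZn HNe -scalemx1 scalerA scalemx1.
by rewrite mulrC mulfVK // expf_neq0.
Qed.

Definition fl (l : nat) (L : closedFieldType) (HL : l \in [pchar L]) (a : 'F_l) : L :=
  in_alg (pPrimeCharType HL) a.

Lemma fl_zmod l L HL : zmod_morphism (@fl l L HL).
Proof. by move=> x y; rewrite /fl rmorphB. Qed.
Lemma fl_mon l L HL : monoid_morphism (@fl l L HL).
Proof. by split; rewrite /fl ?rmorph1 // => x y; rewrite rmorphM. Qed.

HB.instance Definition _ l L HL := GRing.isZmodMorphism.Build _ _ (@fl l L HL) (@fl_zmod l L HL).
HB.instance Definition _ l L HL := GRing.isMonoidMorphism.Build _ _ (@fl l L HL) (@fl_mon l L HL).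

Lemma map_frob (K L : nzRingType) (f : {rmorphism K -> L}) a1 a2 q :
  map_poly f (frob_charpoly K a1 a2 q) = frob_charpoly L a1 a2 q.
Proof.
rewrite /frob_charpoly !mul_polyC !rmorphD /= !map_polyZ !map_polyXn map_polyX map_polyC /= !rmorph_int rmorphM /= !rmorph_nat. by rewrite rmorph_int.
Qed.


Lemma quad_root (L : closedFieldType) (b c : L) : exists x, x ^+ 2 + b * x + c = 0.
Proof.
have [x Hx] := @solve_monicpoly L 2 (nth 0 [:: -c; -b]) isT.
exists x; move: Hx; rewrite !big_ord_recl big_ord0 /= expr0 expr1 mulr1 addr0.
by move=> ->; ring.
Qed.

Lemma eig_pow (L : fieldType) n (M : 'M[L]_n) (r : nat) (c mu : L) :
  M ^+ r = c%:M -> eigenvalue M mu -> mu ^+ r = c.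
Proof.
move=> HM /eigenvalueP [v Hv nz].
have Hp : forall k, v *m M ^+ k = mu ^+ k *: v.
  elim=> [|k IH]; first by rewrite !expr0 mulmx1 scale1r.
  by rewrite exprSr -mulmxE mulmxA IH -scalemxAl Hv scalerA -exprSr.
move: (Hp r); rewrite HM mul_mx_scalar => /eqP; rewrite -subr_eq0 -scalerBl scaler_eq0.
by rewrite (negbTE nz) orbF subr_eq0 => /eqP.
Qed.

Theorem proposition2
  (p k : nat) (q : nat) (a1 a2 : int) (l : nat) (r : nat)
  (Hp : prime p) (Hk : (0 < k)%N) (Hq : q = (p ^ k)%N)
  (Hl : prime l) (Hlp : l != p)
  (F : 'M['F_l]_4)
  (HF : char_poly F = frob_charpoly 'F_l a1 a2 q)
  (Hr : pgl_order F r)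
  (Hcop : coprime l r)
  (L : closedFieldType) (HL : l \in [pchar L]) :
  exists (z1 z2 : L) (n1 n2 : nat),
    [/\ z1 ^+ r = 1 /\ z2 ^+ r = 1,
        n1.-primitive_root z1 /\ n2.-primitive_root z2,
        (if odd r then lcmn n1 n2 = r
         else lcmn n1 n2 = r \/ lcmn n1 n2 = r./2),
        (exists u1 u2 : L,
           [/\ u1 ^+ 2 = eta_of z1, u2 ^+ 2 = eta_of z2 &
                (a1%:~R) ^+ 2 = (u1 + u2) ^+ 2 * q%:R]) &
        (a2%:~R - 2 * q%:R) ^+ 2 = eta_of z1 * eta_of z2 * (q%:R) ^+ 2].
Proof.
pose f := @fl l L HL.
pose M := map_mx f F.
have [r0 [/is_scalar_mxP [al Hal] Hmin]] := Hr.
have HM : M ^+ r = (f al)%:M by rewrite /M -rmorphXn /= Hal map_scalar_mx.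
have Hch : char_poly M = frob_charpoly L a1 a2 q by rewrite -map_char_poly HF map_frob.
have Qnz : q%:R != 0 :> L.
  rewrite Hq natrX expf_neq0 // -(dvdn_pcharf HL) dvdn_prime2 //.
have rnz : r%:R != 0 :> L.
  rewrite -(dvdn_pcharf HL); apply/negP => /gcdn_idPl Hg.
  by move: Hcop; rewrite /coprime Hg => /eqP l1; move: (prime_gt1 Hl); rewrite l1.
set Q := q%:R : L.
set A1 := a1%:~R : L.
set A2 := a2%:~R : L.
have [s1 Hs1] := @quad_root L A1 (A2 - 2 * Q).
pose s2 := - A1 - s1.
have [x1 Hx1] := @quad_root L (- s1) Q.
have [x2 Hx2] := @quad_root L (- s2) Q.
pose y1 := s1 - x1.
pose y2 := s2 - x2.
have xy1 : x1 * y1 = Q by rewrite /y1; apply/eqP; rewrite -subr_eq0 -oppr_eq0 -Hx1; apply/eqP; ring.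
have xy2 : x2 * y2 = Q by rewrite /y2; apply/eqP; rewrite -subr_eq0 -oppr_eq0 -Hx2; apply/eqP; ring.
have x1nz : x1 != 0 by apply: contraNneq Qnz => e; rewrite -/Q -xy1 e mul0r.
have y1nz : y1 != 0 by apply: contraNneq Qnz => e; rewrite -/Q -xy1 e mulr0.
have x2nz : x2 != 0 by apply: contraNneq Qnz => e; rewrite -/Q -xy2 e mul0r.
have y2nz : y2 != 0 by apply: contraNneq Qnz => e; rewrite -/Q -xy2 e mulr0.
have eA2 : A2 = - s1 ^+ 2 - A1 * s1 + 2 * Q.
  by apply/eqP; rewrite -subr_eq0 -Hs1; apply/eqP; ring.
have Hev : forall x, (char_poly M).[x] = (x ^+ 2 - s1 * x + Q) * (x ^+ 2 - s2 * x + Q).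
  move=> x; rewrite Hch /frob_charpoly !(hornerD, hornerCM, hornerXn, hornerX, hornerC) -/A1 -/A2 -/Q eA2 /s2 natrX -/Q.
  ring.
have evx : forall x y s, x + y = s -> x * y = Q -> x ^+ 2 - s * x + Q = 0.
  by move=> x y s <- <-; ring.
have e1 : x1 + y1 = s1 by rewrite /y1; ring.
have e1' : y1 + x1 = s1 by rewrite /y1; ring.
have e2 : x2 + y2 = s2 by rewrite /y2; ring.
have e2' : y2 + x2 = s2 by rewrite /y2; ring.
have xy1' : y1 * x1 = Q by rewrite mulrC.
have xy2' : y2 * x2 = Q by rewrite mulrC.
have ev1 : eigenvalue M x1.
  by rewrite eigenvalue_root_char /root Hev (evx x1 y1 s1 e1 xy1) mul0r.
have ev1' : eigenvalue M y1.
  by rewrite eigenvalue_root_char /root Hev (evx y1 x1 s1 e1' xy1') mul0r.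
have ev2 : eigenvalue M x2.
  by rewrite eigenvalue_root_char /root Hev (evx x2 y2 s2 e2 xy2) mulr0.
have ev2' : eigenvalue M y2.
  by rewrite eigenvalue_root_char /root Hev (evx y2 x2 s2 e2' xy2') mulr0.
have falnz : f al != 0.
  by rewrite -(@eig_pow _ _ _ _ _ _ HM ev1) expf_neq0.
pose z1 := x1 / y1.
pose z2 := x2 / y2.
have z1r : z1 ^+ r = 1.
  by rewrite /z1 exprMn exprVn (@eig_pow _ _ _ _ _ _ HM ev1) (@eig_pow _ _ _ _ _ _ HM ev1') mulfV.
have z2r : z2 ^+ r = 1.
  by rewrite /z2 exprMn exprVn (@eig_pow _ _ _ _ _ _ HM ev2) (@eig_pow _ _ _ _ _ _ HM ev2') mulfV.
have [n1 P1 d1] := prim_order_exists r0 z1r.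
have [n2 P2 d2] := prim_order_exists r0 z2r.
pose m := lcmn n1 n2.
have z1m : z1 ^+ m = 1 by apply/eqP; rewrite -(prim_order_dvd P1) dvdn_lcml.
have z2m : z2 ^+ m = 1 by apply/eqP; rewrite -(prim_order_dvd P2) dvdn_lcmr.
have mr : (m %| r)%N by rewrite dvdn_lcm d1 d2.
have m0 : (0 < m)%N by rewrite lcmn_gt0 (prim_order_gt0 P1) (prim_order_gt0 P2).
have quad : forall mu x y s, x + y = s -> x * y = Q ->
    mu ^+ 2 - s * mu + Q = 0 -> mu = x \/ mu = y.
  move=> mu x y s <- <- h.
  have : (mu - x) * (mu - y) = 0 by rewrite -h; ring.
  by move/eqP; rewrite mulf_eq0 !subr_eq0 => /orP [/eqP -> | /eqP ->]; [left | right].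
have sq1 : x1 ^+ 2 = Q * z1 by rewrite /z1 -xy1; field.
have sq1' : y1 ^+ 2 = Q / z1.
  by rewrite /z1 -xy1; field; rewrite x1nz y1nz.
have sq2 : x2 ^+ 2 = Q * z2 by rewrite /z2 -xy2; field.
have sq2' : y2 ^+ 2 = Q / z2.
  by rewrite /z2 -xy2; field; rewrite x2nz y2nz.
have Heig : forall mu, eigenvalue M mu -> mu ^+ (2 * m) = Q ^+ m.
  move=> mu; rewrite eigenvalue_root_char /root Hev mulf_eq0 => /orP [] /eqP h.
    case: (quad mu x1 y1 s1 e1 xy1 h) => ->; rewrite exprM.
      by rewrite sq1 exprMn z1m mulr1.
    by rewrite sq1' exprMn exprVn z1m invr1 mulr1.
  case: (quad mu x2 y2 s2 e2 xy2 h) => ->; rewrite exprM.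
    by rewrite sq2 exprMn z2m mulr1.
  by rewrite sq2' exprMn exprVn z2m invr1 mulr1.
have H2m : M ^+ (2 * m) = (Q ^+ m)%:M.
  exact: (@pow_scalar L 3 M r (2 * m) (f al) (Q ^+ m) r0 rnz falnz HM Heig).
have Fsc : is_scalar_mx (F ^+ (2 * m)).
  by rewrite -(map_mx_is_scalar f) rmorphXn /= -/M H2m scalar_mx_is_scalar.
have r2m : (r <= 2 * m)%N.
  case: (ltnP (2 * m) r) => // h.
  have h2 : (0 < 2 * m)%N by rewrite muln_gt0 m0.
  by move: (Hmin _ h2 h); rewrite Fsc.
have et1 : eta_of z1 = s1 ^+ 2 / Q.
  by rewrite /eta_of /z1 -e1 -xy1; field; rewrite x1nz y1nz.
have et2 : eta_of z2 = s2 ^+ 2 / Q.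
  by rewrite /eta_of /z2 -e2 -xy2; field; rewrite x2nz y2nz.
have [w Hw] := @nth_root_ex L 2 Q isT.
have wnz : w != 0 by apply: contraNneq Qnz => e; rewrite -/Q -Hw e expr0n.
exists z1, z2, n1, n2; split.
- by split.
- by split.
- have [c Hc] := dvdnP mr.
  have c2 : (c <= 2)%N by rewrite -(leq_pmul2r m0) -Hc.
  move: Hc r0; rewrite -/m.
  case: c c2 => [|[|[|c]]] // _ ->; first by rewrite mul0n.
    by rewrite mul1n => _; case: ifP => _ //; left.
  by move=> _; rewrite oddM /=; right; rewrite mul2n doubleK.
- exists (s1 / w), (s2 / w); split.
  + by rewrite et1 expr_div_n Hw.
  + by rewrite et2 expr_div_n Hw.
  + rewrite -Hw /s2; field; exact: wnz.
- rewrite et1 et2 eA2 /s2; field; exact: Qnz.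
Qed.
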